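(* Let $L$ be the combinatorial Laplacian of a connected weighted graph on $N$ vertices, with eigenvalues $\lambda_1\le\cdots\le\lambda_N$, orthonormal eigenvectors $u_1,\dots,u_N$, $U_k=[u_1,\dots,u_k]$ and $\mathbf U_i=\mathrm{span}(u_1,\dots,u_i)$. Let $L_c$ be obtained from $L$ by a single level of Laplacian consistent coarsening into $n$ contraction sets. If, for each $i\le k$, $L_c$ and $L$ are $(\mathbf U_i,\epsilon_i)$-similar, then $$\sum_{i\le k}\epsilon_i\ge\min_{\mathcal P}\mathcal K_n(U_k,\mathcal P),$$ the minimum being the optimal $n$-means cost of the points $U_k(1,:),\dots,U_k(N,:)$ over all partitions $\mathcal P$ into $n$ clusters.
   Context: Single-level Laplacian consistent coarsening: the vertex set is partitioned into contraction sets $\mathcal V_0^{(1)},\dots,\mathcal V_0^{(n)}$, each inducing a connected subgraph; $P\in\mathbb R^{n\times N}$ with $P(r,i)=1/|\mathcal V_0^{(r)}|$ if $v_i\in\mathcal V_0^{(r)}$ and $0$ otherwise; $P^+(i,r)=1$ if $v_i\in\mathcal V_0^{(r)}$ and $0$ otherwise; $L_c=(P^+)^\top LP^+$. $L_c$ and $L$ are $(\mathbf R,\epsilon)$-similar if $\|x-P^+Px\|_L\le\epsilon\|x\|_L$ for all $x\in\mathbf R$, where $\|y\|_L=\sqrt{y^\top Ly}$. For $X\in\mathbb R^{N\times d}$ and a partition $\mathcal P=\{\mathcal S_1,\dots,\mathcal S_m\}$ of the row indices, $\mathcal K_m(X,\mathcal P)=\sum_{z=1}^m\sum_{i,j\in\mathcal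 S_z}\frac{\|X(i,:)-X(j,:)\|_2^2}{2|\mathcal S_z|}$. *)

(* Defs.v *)
From HB Require Import structures.
From mathcomp Require Import all_boot all_order all_algebra.
Set Implicit Arguments. Unset Strict Implicit. Unset Printing Implicit Defensive.
Import Order.TTheory GRing.Theory Num.Theory.
Local Open Scope ring_scope.

Section Defs.
Variable R : rcfType.

Definition weighted_graph N (W : 'M[R]_N) : Prop :=
  [/\ forall i j, W i j = W j i, forall i j, 0 <= W i j & forall i, W i i = 0].

Definition edge N (W : 'M[R]_N) : rel 'I_N := fun i j => 0 < W i j.

Definition connected_graph N (W : 'M[R]_N) : Prop :=
  forall i j, connect (edge W) i j.

Definition laplacian N (W : 'M[R]_N) : 'M[R]_N :=
  \matrix_(i, j) ((i == j)%:R * (\sum_(l < N) W i l) - W i j).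

(* Contraction sets V^(r) = { i | part i = r }; they form a partition into n
   nonempty sets, each inducing a connected subgraph. *)
Definition contraction_partition N n (W : 'M[R]_N) (part : 'I_N -> 'I_n) : Prop :=
  (forall r : 'I_n, exists i, part i = r) /\
  (forall i j, part i = part j ->
     connect (fun a b => edge W a b && (part a == part i) && (part b == part i)) i j).

Definition csize N n (part : 'I_N -> 'I_n) (r : 'I_n) : nat := #|[set i | part i == r]|.

Definition Pmat N n (part : 'I_N -> 'I_n) : 'M[R]_(n, N) :=
  \matrix_(r, i) (if part i == r then (csize part r)%:R^-1 else 0).

Definition Pplus N n (part : 'I_N -> 'I_n) : 'M[R]_(N, n) :=
  \matrix_(i, r) (if part i == r then 1 else 0).

Definition Lcoarse N n (L : 'M[R]_N) (part : 'I_N -> 'I_n) : 'M[R]_n :=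
  (Pplus part)^T *m L *m Pplus part.

Definition normL N (L : 'M[R]_N) (y : 'cV[R]_N) : R := Num.sqrt ((y^T *m L *m y) ord0 ord0).

Definition coarse_similar N n (L : 'M[R]_N) (part : 'I_N -> 'I_n) (Rset : 'cV[R]_N -> Prop) (eps : R) : Prop :=
  forall x, Rset x -> normL L (x - Pplus part *m Pmat part *m x) <= eps * normL L x.

Definition span_first N (U : 'M[R]_N) (i : nat) (x : 'cV[R]_N) : Prop :=
  exists c : 'cV[R]_N, (forall j : 'I_N, (i <= j)%N -> c j ord0 = 0) /\ x = U *m c.

(* K_m(X, P) where X = U_k (rows U(v, 0..k-1)) and the partition of row indices
   is given by a cluster assignment f : 'I_N -> 'I_m. *)
Definition kmeans_cost N m (U : 'M[R]_N) (k : nat) (f : 'I_N -> 'I_m) : R :=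
  \sum_(z < m) \sum_(i | f i == z) \sum_(j | f j == z)
     (\sum_(c < N | (c < k)%N) (U i c - U j c) ^+ 2) / (2 * (csize f z)%:R).

End Defs.

(* Main.v *)
Require Import Defs.
From HB Require Import structures.
From mathcomp Require Import all_boot all_order all_algebra.
From mathcomp Require Import ring lra.
Import Order.TTheory GRing.Theory Num.Theory.
Local Open Scope ring_scope.

Section H.
Variable R : rcfType.
Variable N : nat.

Lemma qformE (M : 'M[R]_N) (x y : 'cV[R]_N) :
  (x^T *m M *m y) ord0 ord0 = \sum_a \sum_b x a ord0 * M a b * y b ord0.
Proof.
rewrite mxE exchange_big /=; apply: eq_bigr => a _.
rewrite mxE mulr_suml; apply: eq_bigr => b _; by rewrite !mxE.
Qed.

Lemma lap_qform (W : 'M[R]_N) (x : 'cV[R]_N) : weighted_graph W ->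
  (x^T *m laplacian W *m x) ord0 ord0 =
  \sum_a \sum_b W a b * (x a ord0 - x b ord0) ^+ 2 / 2.
Proof.
case=> Ws _ _; rewrite qformE.
have E1 : \sum_a \sum_b W a b * x b ord0 ^+ 2 = \sum_a \sum_b W a b * x a ord0 ^+ 2.
  rewrite exchange_big /=; apply: eq_bigr => a _; apply: eq_bigr => b _; by rewrite Ws.
transitivity (\sum_a \sum_b W a b * x a ord0 ^+ 2 - \sum_a \sum_b W a b * x a ord0 * x b ord0).
  rewrite -sumrB; apply: eq_bigr => a _.
  transitivity (\sum_b ((a == b)%:R * (x a ord0 ^+ 2 * \sum_l W a l)) - \sum_b W a b * x a ord0 * x b ord0).
    rewrite -sumrB; apply: eq_bigr => b _; rewrite !mxE.
    case: eqP => [<-|_]; rewrite ?mul1r ?mul0r; ring.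
  congr (_ - _); rewrite (bigD1 a) //= eqxx [X in _ + X]big1 ?addr0.
    by rewrite mul1r mulr_sumr; apply: eq_bigr => b _; ring.
  by move=> b; rewrite eq_sym => /negbTE ->; rewrite mul0r.
transitivity ((\sum_a \sum_b W a b * x a ord0 ^+ 2 + \sum_a \sum_b W a b * x b ord0 ^+ 2
    - 2 * \sum_a \sum_b W a b * x a ord0 * x b ord0) / 2).
  by rewrite E1; field.
rewrite mulr_sumr -big_split -sumrB /= mulr_suml; apply: eq_bigr => a _.
rewrite mulr_sumr -big_split -sumrB /= mulr_suml; apply: eq_bigr => b _.
ring.
Qed.

Lemma lap_psd (W : 'M[R]_N) (x : 'cV[R]_N) : weighted_graph W ->
  0 <= (x^T *m laplacian W *m x) ord0 ord0.
Proof.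
move=> hW; rewrite lap_qform //; case: hW => _ Wp _.
apply: sumr_ge0 => a _; apply: sumr_ge0 => b _.
by rewrite divr_ge0 // mulr_ge0 // sqr_ge0.
Qed.

Lemma lap_sym (W : 'M[R]_N) : weighted_graph W -> (laplacian W)^T = laplacian W.
Proof.
case=> Ws _ _; apply/matrixP => i j; rewrite !mxE eq_sym Ws.
by case: eqP => [->|]; rewrite ?mul0r.
Qed.

End H.

Lemma connect_const (R : rcfType) (T : finType) (e : rel T) (g : T -> R) :
  (forall a b, e a b -> g a = g b) -> forall i j, connect e i j -> g i = g j.
Proof.
move=> H i j /connectP [p]; elim: p i => [|a p IH] i /=; first by move=> _ ->.
by move=> /andP [eia pa] ej; rewrite (H _ _ eia); apply: IH.
Qed.

Lemma edge_const (R : rcfType) N (W : 'M[R]_N) (x : 'cV[R]_N) : weighted_graph W ->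
  (x^T *m laplacian W *m x) ord0 ord0 = 0 ->
  forall a b, 0 < W a b -> x a ord0 = x b ord0.
Proof.
move=> hW; rewrite lap_qform //; case: hW => _ Wp _ h0 a b wab.
have t0 : forall a b, 0 <= W a b * (x a ord0 - x b ord0) ^+ 2 / 2.
  by move=> ? ?; rewrite divr_ge0 // mulr_ge0 // sqr_ge0.
have t1 : forall a : 'I_N, xpredT a -> 0 <= \sum_b W a b * (x a ord0 - x b ord0) ^+ 2 / 2.
  by move=> a' _; apply: sumr_ge0 => b' _; exact: t0.
have := psumr_eq0P t1 h0 (i := a) isT.
move/(psumr_eq0P (P := xpredT) (fun b _ => t0 a b)) => /(_ b isT)/eqP.
rewrite mulf_eq0 invr_eq0 pnatr_eq0 orbF mulf_eq0 (gt_eqF wab) /= sqrf_eq0 subr_eq0.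
by move/eqP.
Qed.
Section H.
Variable R : rcfType.
Variable N m : nat.
Variable f : 'I_N -> 'I_m.

Lemma sum_const_cl (z : 'I_m) (c : R) : \sum_(j | f j == z) c = c * (csize f z)%:R.
Proof.
rewrite sumr_const /csize cardsE mulr_natr.
by congr (_ *+ _); apply: eq_card => j; rewrite !inE.
Qed.

Lemma QE (a b : 'I_N) : (Pplus R f *m Pmat R f) a b = (f a == f b)%:R / (csize f (f b))%:R.
Proof.
rewrite mxE (bigD1 (f b)) //= big1 ?addr0.
  rewrite !mxE eqxx; case: eqP => _; rewrite ?mul1r ?mul0r //.
move=> r rb; rewrite !mxE [f b == r]eq_sym (negbTE rb) mulr0 //.

Qed.

End H.

Section H2.
Variable R : rcfType.
Variable N m : nat.
Variable f : 'I_N -> 'I_m.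

Lemma cs_pos (i : 'I_N) : (0 < csize f (f i))%N.
Proof. by rewrite /csize card_gt0; apply/set0Pn; exists i; rewrite inE. Qed.

Lemma sum_fi (G : 'I_N -> R) :
  \sum_z \sum_(i | f i == z) G i = \sum_i G i.
Proof.
rewrite (partition_big f xpredT) //=.
Qed.

Lemma cluster (x : 'cV[R]_N) :
  \sum_z \sum_(i | f i == z) \sum_(j | f j == z) (x i ord0 - x j ord0) ^+ 2 / (2 * (csize f z)%:R)
  = (x^T *m (x - Pplus R f *m Pmat R f *m x)) ord0 ord0.
Proof.
transitivity (\sum_i (x i ord0 ^+ 2 - \sum_(j | f j == f i) x i ord0 * x j ord0 / (csize f (f i))%:R)).
  rewrite -sum_fi; apply: eq_bigr => z _.
  have [c0|cn0] := eqVneq (csize f z) 0%N.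
    rewrite !big1 // => i /eqP fi; move: (cs_pos i); by rewrite fi c0.
  have cR : (csize f z)%:R != 0 :> R by rewrite pnatr_eq0.
  transitivity (\sum_(i | f i == z) (x i ord0 ^+ 2 - \sum_(j | f j == z) x i ord0 * x j ord0 / (csize f z)%:R)).
    rewrite sumrB.
    transitivity (\sum_(i | f i == z) \sum_(j | f j == z) (x i ord0 ^+ 2 / (2 * (csize f z)%:R)
        + x j ord0 ^+ 2 / (2 * (csize f z)%:R)) - \sum_(i | f i == z) \sum_(j | f j == z) x i ord0 * x j ord0 / (csize f z)%:R).
      rewrite -sumrB; apply: eq_bigr => i _; rewrite -sumrB; apply: eq_bigr => j _.
      by field.
    congr (_ - _).
    under eq_bigr => i _ do rewrite big_split /= sum_const_cl.
    rewrite big_split /= sum_const_cl -mulr_suml -mulrDl -big_split /= mulr_suml.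
    by apply: eq_bigr => i _; field.
  by apply: eq_bigr => i /eqP <-.
rewrite mxE; apply: eq_bigr => i _.
rewrite [x^T _ _]mxE [(x - _) _ _]mxE [X in _ = _ * (_ + X)]mxE mxE.
under [X in _ = _ * (_ - X)]eq_bigr => j _ do rewrite QE.
rewrite mulrBr expr2; congr (_ - _).
rewrite mulr_sumr big_mkcond /=; apply: eq_bigr => j _.
have [e|ne] := eqVneq (f j) (f i).
  rewrite e mul1r; ring.
by rewrite !mul0r mulr0.
Qed.
End H2.

Lemma kmeans_split (R : rcfType) N m (U : 'M[R]_N) k (f : 'I_N -> 'I_m) :
  kmeans_cost U k f = \sum_(c < N | (c < k)%N)
    ((col c U)^T *m (col c U - Pplus R f *m Pmat R f *m col c U)) ord0 ord0.
Proof.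
rewrite /kmeans_cost.
under eq_bigr => z _ do under eq_bigr => i _ do under eq_bigr => j _ do rewrite mulr_suml.
under eq_bigr => z _ do under eq_bigr => i _ do rewrite exchange_big /=.
under eq_bigr => z _ do rewrite exchange_big /=.
rewrite exchange_big /=; apply: eq_bigr => c _.
rewrite -cluster; apply: eq_bigr => z _; apply: eq_bigr => i _; apply: eq_bigr => j _.
by rewrite !mxE.
Qed.
Lemma dotC (R : rcfType) N (x y : 'cV[R]_N) : (x^T *m y) ord0 ord0 = (y^T *m x) ord0 ord0.
Proof. rewrite !mxE; apply: eq_bigr => i _; by rewrite !mxE mulrC. Qed.

Lemma key (R : rcfType) N (L : 'M[R]_N) (u y : 'cV[R]_N) (l : R) :
  L^T = L -> L *m u = l *: u -> (u^T *m u) ord0 ord0 = 1 ->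
  (forall x : 'cV[R]_N, 0 <= (x^T *m L *m x) ord0 ord0) ->
  l * ((u^T *m y) ord0 ord0) ^+ 2 <= (y^T *m L *m y) ord0 ord0.
Proof.
move=> Ls Lu uu psd; set s := (u^T *m y) ord0 ord0.
have uL : u^T *m L = l *: u^T by rewrite -{1}Ls -trmx_mul Lu linearZ.
have := psd (y - s *: u).
have tZ : (y - s *: u)^T = y^T - s *: u^T.
  by apply/matrixP => i j; rewrite !mxE.
rewrite tZ mulmxBl -scalemxAl uL scalerA mulmxBr !mulmxBl -!scalemxAr -!scalemxAl.
rewrite -!mulmxA Lu -!scalemxAr.
have e1 : \sum_j u^T ord0 j * y j ord0 = s by rewrite /s mxE.
have e2 : \sum_j y^T ord0 j * u j ord0 = s by rewrite /s dotC mxE.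
have e3 : \sum_j u^T ord0 j * u j ord0 = 1 by rewrite -uu mxE.
rewrite !mxE e1 e2 e3.
set Y := \sum_j y^T ord0 j * (L *m y) j ord0.
have -> : Y - s * l * s - (s * (l * s) - s * (s * l * 1)) = Y - l * s ^+ 2 by ring.
by rewrite subr_ge0.
Qed.

Lemma Qfix (R : rcfType) N n (W : 'M[R]_N) (part : 'I_N -> 'I_n) (x : 'cV[R]_N) :
  weighted_graph W -> contraction_partition W part ->
  (x^T *m laplacian W *m x) ord0 ord0 = 0 -> Pplus R part *m Pmat R part *m x = x.
Proof.
move=> hW [_ hc] h0; have he := @edge_const _ _ _ _ hW h0.
apply/matrixP => a j; rewrite (ord1 j) mxE.
under eq_bigr => b _ do rewrite QE.
rewrite (bigID (fun b => part b == part a)) /= [X in _ + X]big1 ?addr0; last first.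
  by move=> b /negbTE; rewrite eq_sym => ->; rewrite !mul0r.
transitivity (\sum_(b | part b == part a) x a ord0 / (csize part (part a))%:R).
  apply: eq_bigr => b /eqP pb; rewrite pb eqxx mul1r mulrC.
  congr (_ * _); symmetry.
  apply: (@connect_const R _ _ (fun v => x v ord0) _ _ _ (hc a b (esym pb))).
  by move=> v w /andP [/andP [evw _] _]; apply: he.
rewrite sum_const_cl mulfVK // pnatr_eq0 -lt0n; exact: cs_pos.
Qed.

Theorem proposition3 (R : rcfType) (N n k : nat) (W : 'M[R]_N)
  (lam : 'I_N -> R) (U : 'M[R]_N) (part : 'I_N -> 'I_n) (eps : nat -> R) :
  weighted_graph W ->
  connected_graph W ->
  U^T *m U = 1%:M ->
  laplacian W *m U = U *m diag_mx (\row_j lam j) ->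
  (forall i j : 'I_N, (i <= j)%N -> lam i <= lam j) ->
  (k <= N)%N ->
  contraction_partition W part ->
  (forall i, (1 <= i <= k)%N -> 0 <= eps i) ->
  (forall i, (1 <= i <= k)%N ->
     coarse_similar (laplacian W) part (span_first U i) (eps i)) ->
  exists f : 'I_N -> 'I_n, (forall z, exists v, f v = z) /\
    kmeans_cost U k f <= \sum_(1 <= i < k.+1) eps i.
Proof.
move=> hW _ hU hL _ hk hP heps hsim.
exists part; split; first by case: hP.
rewrite kmeans_split big_add1 /= big_mkord (big_ord_widen _ (fun i => eps i.+1) hk).
apply: ler_sum => c ck.
have ck' : (1 <= c.+1 <= k)%N by [].
set L := laplacian W; set u := col c U; set y := u - _.
set s := (u^T *m y) ord0 ord0.
have Ls : L^T = L := @lap_sym _ _ _ hW.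
have Lu : L *m u = lam c *: u.
  apply/matrixP => i j; rewrite (ord1 j) [RHS]mxE [col _ _ _ _]mxE.
  transitivity ((L *m U) i c).
    by rewrite !mxE; apply: eq_bigr => b _; rewrite /u !mxE.
  by rewrite hL mul_mx_diag !mxE mulrC.
have uu : (u^T *m u) ord0 ord0 = 1.
  have e : (U^T *m U) c c = 1 by rewrite hU mxE eqxx.
  rewrite -e !mxE; by apply: eq_bigr => i _; rewrite !mxE.
have psd := @lap_psd _ _ W ^~ hW.
have hkey := @key _ _ L u y _ Ls Lu uu psd.
have uLu : (u^T *m L *m u) ord0 ord0 = lam c.
  by rewrite -mulmxA Lu -scalemxAr mxE uu mulr1.
have lam0 : 0 <= lam c by rewrite -uLu; exact: psd.
have s0 : 0 <= s.
  rewrite /s /y -cluster; apply: sumr_ge0 => z _; apply: sumr_ge0 => i _.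
  apply: sumr_ge0 => j _; by rewrite divr_ge0 ?sqr_ge0 // mulr_ge0 // ler0n.
have e0 := heps _ ck'.
have hs : normL L y <= eps c.+1 * normL L u.
  apply: hsim => //; exists (delta_mx c 0); split; last by rewrite /u colE.
  move=> j cj; rewrite mxE; case: eqP => // ej; move: cj; by rewrite ej ltnn.
move: hs; rewrite /normL uLu => hs.
have yL0 : 0 <= (y^T *m L *m y) ord0 ord0 := psd y.
have hy : (y^T *m L *m y) ord0 ord0 <= eps c.+1 ^+ 2 * lam c.
  rewrite -(sqr_sqrtr yL0) -(sqr_sqrtr lam0).
  have := sqrtr_ge0 ((y^T *m L *m y) ord0 ord0); have := sqrtr_ge0 (lam c).
  move: hs; set p := Num.sqrt _; set q := Num.sqrt _ => hs q0 p0.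
  rewrite -exprMn; apply: lerXn2r; rewrite ?nnegrE ?mulr_ge0 //.
have [lpos|lz] := ltrP 0 (lam c).
  have h2 : s ^+ 2 <= eps c.+1 ^+ 2.
    rewrite -(ler_pM2l lpos); apply: le_trans hkey _; by rewrite mulrC.
  by rewrite -ler_sqr ?inE.
have l0 : lam c = 0 by apply/le_anti; rewrite lz lam0.
have : Pplus R part *m Pmat R part *m u = u by apply: Qfix hW hP _; rewrite uLu.
move=> hQ; rewrite /s /y hQ subrr mulmx0 mxE; exact: e0.
Qed.
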